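(* Consider the two-type Bellman–Harris process described in the context. Let $H(t),k_1(t),k_2(t)$ be nonnegative functions on $[0,\infty)$ with $\lim_{t\to\infty}k_i(t)=0$ ($i=1,2$) and $\lim_{t\to\infty}H(t)=\infty$. Suppose $$\lim_{t\to\infty}H(t)\mathbf{Q}(t;1-\lambda_1k_1(t),1-\lambda_2k_2(t))=\mathbf{h}(\lambda_1,\lambda_2),\quad\lambda_1\ge0,\ \lambda_2\ge0,$$ for a function $\mathbf{h}=(h_1,h_2)$ whose components are continuous in both arguments. Then $$\lim_{t\to\infty}H(t)\mathbf{Q}(t;e^{-\lambda_1k_3(t)},e^{-\lambda_2k_4(t)})=\mathbf{h}(\lambda_1,\lambda_2)$$ for any functions $k_3,k_4$ with $\lim_{t\to\infty}k_3(t)/k_1(t)=1$ and $\lim_{t\to\infty}k_4(t)/k_2(t)=1$.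
   Context: Two-type Bellman–Harris branching process $\mathbf{Z}(t)=(Z_1(t),Z_2(t))$ (particles of type $i\in\{1,2\}$ have life-length distribution $G_i$ and offspring generating function $f_i(s_1,s_2)$, and evolve independently). For $\mathbf{s}=(s_1,s_2)\in[0,1]^2$, $F_i(t;\mathbf{s})=\mathbf{E}[s_1^{Z_1(t)}s_2^{Z_2(t)}\mid\text{one initial particle of type }i]$ and $\mathbf{Q}(t;\mathbf{s})=(1-F_1(t;\mathbf{s}),1-F_2(t;\mathbf{s}))^\dagger$. *)

(* Defs.v *)
From HB Require Import structures.
From mathcomp Require Import all_boot all_order all_algebra.
From mathcomp Require Import all_classical all_reals all_analysis.
Set Implicit Arguments. Unset Strict Implicit. Unset Printing Implicit Defensive.
Import Order.TTheory GRing.Theory Num.Theory.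
Import numFieldNormedType.Exports.
Local Open Scope classical_set_scope.
Local Open Scope ring_scope.

Definition is_pmf2 (R : realType) (p : nat * nat -> R) : Prop :=
  (forall kl, 0 <= p kl) /\ (\esum_(kl in [set: nat * nat]) (p kl)%:E = 1)%E.

Definition pgf2 (R : realType) (p : nat * nat -> R) (s1 s2 : R) : R :=
  fine (\esum_(kl in [set: nat * nat]) (p kl * s1 ^+ kl.1 * s2 ^+ kl.2)%:E).

(* G1, G2 : life-length distributions (probability measures on [0,oo) with no atom at 0);
   q1, q2 : offspring distributions (f_i = pgf2 q_i);
   p1 t, p2 t : law of (Z1(t), Z2(t)) started from one particle of type 1, resp. 2,
   characterised by the Bellman-Harris integral equations
   F_i(t;s) = (1 - G_i(t)) s_i + int_0^t f_i(F_1(t-u;s), F_2(t-u;s)) dG_i(u). *)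
Definition BH2 (R : realType) (G1 G2 : probability R R)
  (q1 q2 : nat * nat -> R) (p1 p2 : R -> nat * nat -> R) : Prop :=
  [/\ G1 `]-oo, 0]%classic = 0%E /\ G2 `]-oo, 0]%classic = 0%E,
      is_pmf2 q1 /\ is_pmf2 q2,
      (forall t, 0 <= t -> is_pmf2 (p1 t) /\ is_pmf2 (p2 t)),
      (forall t s1 s2 : R, 0 <= t -> 0 <= s1 <= 1 -> 0 <= s2 <= 1 ->
        ((pgf2 (p1 t) s1 s2)%:E =
          ((1 - fine (G1 `[0%R, t]%classic)) * s1)%:E +
          \int[G1]_(u in `[0%R, t]%classic) (pgf2 q1 (pgf2 (p1 (t - u)) s1 s2)
                                            (pgf2 (p2 (t - u)) s1 s2))%:E)%E)
    & (forall t s1 s2 : R, 0 <= t -> 0 <= s1 <= 1 -> 0 <= s2 <= 1 ->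
        ((pgf2 (p2 t) s1 s2)%:E =
          ((1 - fine (G2 `[0%R, t]%classic)) * s2)%:E +
          \int[G2]_(u in `[0%R, t]%classic) (pgf2 q2 (pgf2 (p1 (t - u)) s1 s2)
                                            (pgf2 (p2 (t - u)) s1 s2))%:E)%E)].

Definition BH_F (R : realType) (p : R -> nat * nat -> R) (t s1 s2 : R) : R :=
  pgf2 (p t) s1 s2.

(* Main.v *)
Require Import Defs.
From HB Require Import structures.
From mathcomp Require Import all_boot all_order all_algebra.
From mathcomp Require Import all_classical all_reals all_analysis.
Import Order.TTheory GRing.Theory Num.Theory.
Import numFieldNormedType.Exports.
Local Open Scope classical_set_scope.
Local Open Scope ring_scope.

Lemma pgf2_mono (R : realType) (p : nat * nat -> R) (s1 s1' s2 s2' : R) :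
  is_pmf2 p -> 0 <= s1 -> s1 <= s1' -> s1' <= 1 -> 0 <= s2 -> s2 <= s2' -> s2' <= 1 ->
  pgf2 p s1 s2 <= pgf2 p s1' s2'.
Proof.
move=> [p0 p1] h1 h2 h3 h4 h5 h6.
have le1 : forall a b : R, 0 <= a <= 1 -> 0 <= b <= 1 ->
   (\esum_(kl in [set: nat * nat]) (p kl * a ^+ kl.1 * b ^+ kl.2)%:E <= 1)%E.
  move=> a b /andP[a0 a1] /andP[b0 b1]; rewrite -p1; apply: le_esum => kl _.
  rewrite lee_fin -[leRHS]mulr1 -mulrA ler_wpM2l //.
  by rewrite mulr_ile1 ?exprn_ge0 ?exprn_ile1.
have ge0 : forall a b : R, 0 <= a -> 0 <= b ->
   (0 <= \esum_(kl in [set: nat * nat]) (p kl * a ^+ kl.1 * b ^+ kl.2)%:E)%E.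
  move=> a b a0 b0; apply: esum_ge0 => kl _.
  by rewrite lee_fin !mulr_ge0 ?exprn_ge0.
have fin : forall a b : R, 0 <= a <= 1 -> 0 <= b <= 1 ->
   (\esum_(kl in [set: nat * nat]) (p kl * a ^+ kl.1 * b ^+ kl.2)%:E) \is a fin_num.
  move=> a b ha hb; rewrite ge0_fin_numE; last first.
    by apply: ge0; [case/andP: ha| case/andP: hb].
  exact: (le_lt_trans (le1 a b ha hb) (ltry _)).
have s10 : 0 <= s1' by apply: le_trans h2.
have s20 : 0 <= s2' by apply: le_trans h5.
rewrite /pgf2; apply: fine_le.
- apply: fin; apply/andP; split => //; first exact: le_trans h3; exact: le_trans h6.
- by apply: fin; apply/andP.
apply: le_esum => kl _; rewrite lee_fin ler_pM ?mulr_ge0 ?exprn_ge0 //.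
  by rewrite ler_pM ?exprn_ge0 // lerXn2r.
by rewrite lerXn2r.
Qed.
From mathcomp Require Import lra.
Lemma cont_delta {R: realType} {f : R -> R} {x e : R} :
  {within `[0, +oo[, continuous f} -> 0 <= x -> 0 < e ->
  exists2 d, 0 < d & forall m, 0 <= m -> `|x - m| < d -> `|f x - f m| < e.
Proof.
move=> /subspace_continuousP hc x0 e0.
have /hc : `[0, +oo[%classic x by rewrite /= in_itv /= andbT.
move=> /cvgrPdist_lt /(_ e e0); rewrite near_withinE => /nbhs_ballP [d d0 hd].
exists d => // m m0 xm; apply: hd.
  by rewrite -ball_normE /=.
by rewrite /= in_itv /= andbT.
Qed.

Lemma mainL (R : realType) (F : R -> R -> R -> R) (H k1 k2 a b : R -> R)
  (h : R -> R -> R) (l1 l2 : R) :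
  0 <= l1 -> 0 <= l2 ->
  (\forall t \near +oo, forall s1 s1' s2 s2' : R, 0 <= s1 -> s1 <= s1' -> s1' <= 1 ->
      0 <= s2 -> s2 <= s2' -> s2' <= 1 -> F t s1 s2 <= F t s1' s2') ->
  (\forall t \near +oo, 0 <= H t /\ 0 <= k1 t /\ 0 <= k2 t /\ 0 <= a t /\ 0 <= b t) ->
  k1 t @[t --> +oo] --> (0:R) ->
  k2 t @[t --> +oo] --> (0:R) ->
  a t @[t --> +oo] --> l1 ->
  b t @[t --> +oo] --> l2 ->
  (forall m1 m2, 0 <= m1 -> 0 <= m2 ->
     (H t * (1 - F t (1 - m1 * k1 t) (1 - m2 * k2 t))) @[t --> +oo] --> h m1 m2) ->
  (forall m2, 0 <= m2 -> {within `[0, +oo[, continuous (fun m1 => h m1 m2)}) ->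
  (forall m1, 0 <= m1 -> {within `[0, +oo[, continuous (fun m2 => h m1 m2)}) ->
  (H t * (1 - F t (1 - a t * k1 t) (1 - b t * k2 t))) @[t --> +oo] --> h l1 l2.
Proof.
move=> l10 l20 Fmono pos k1c k2c ac bc hlim hc1 hc2.
apply/cvgrPdist_lt => e e0.
have e4 : 0 < e / 4 by rewrite divr_gt0.
have [d1 d10 hd1] := cont_delta (hc1 l2 l20) l10 e4.
have [U1 eU1] : {U1 : R | U1 = l1 + d1 / 2} by exists (l1 + d1 / 2).
have [L1 eL1] : {L1 : R | L1 = Num.max 0 (l1 - d1 / 2)} by exists (Num.max 0 (l1 - d1 / 2)).
have U10 : 0 <= U1 by rewrite eU1; lra.
have L10 : 0 <= L1 by rewrite eL1 le_max lexx.
have hU1 : `|h l1 l2 - h U1 l2| < e / 4.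
  by apply: hd1 => //; rewrite eU1 opprD addrA subrr add0r normrN ger0_norm; lra.
have hL1 : `|h l1 l2 - h L1 l2| < e / 4.
  apply: hd1 => //; rewrite eL1; case: (leP 0 (l1 - d1 / 2)) => hh.
    rewrite opprB addrC subrK ger0_norm; lra.

  rewrite subr0 ger0_norm; lra.
have [dU dU0 hdU] := cont_delta (hc2 U1 U10) l20 e4.
have [dL dL0 hdL] := cont_delta (hc2 L1 L10) l20 e4.
have [d2 ed2] : {d2 : R | d2 = Num.min dU dL} by exists (Num.min dU dL).
have d20 : 0 < d2 by rewrite ed2 lt_min dU0 dL0.
have d2U : d2 <= dU by rewrite ed2 ge_min lexx.
have d2L : d2 <= dL by rewrite ed2 ge_min lexx orbT.
have [U2 eU2] : {U2 : R | U2 = l2 + d2 / 2} by exists (l2 + d2 / 2).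
have [L2 eL2] : {L2 : R | L2 = Num.max 0 (l2 - d2 / 2)} by exists (Num.max 0 (l2 - d2 / 2)).
have U20 : 0 <= U2 by rewrite eU2; lra.
have L20 : 0 <= L2 by rewrite eL2 le_max lexx.
have dist2 : forall d, d2 <= d -> `|l2 - U2| < d /\ `|l2 - L2| < d.
  move=> d dd; split.
    by rewrite eU2 opprD addrA subrr add0r normrN ger0_norm; lra.
  rewrite eL2; case: (leP 0 (l2 - d2 / 2)) => hh.
    rewrite opprB addrC subrK ger0_norm; lra.

  rewrite subr0 ger0_norm; lra.
have hU2 : `|h U1 l2 - h U1 U2| < e / 4.
  by apply: hdU => //; case: (dist2 _ d2U).
have hL2 : `|h L1 l2 - h L1 L2| < e / 4.
  by apply: hdL => //; case: (dist2 _ d2L).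
move/cvgrPdist_lt: (hlim U1 U2 U10 U20) => /(_ _ e4) evU.
move/cvgrPdist_lt: (hlim L1 L2 L10 L20) => /(_ _ e4) evL.
have d12 : 0 < d1 / 2 by rewrite divr_gt0.
have d22 : 0 < d2 / 2 by rewrite divr_gt0.
move/cvgrPdist_lt: ac => /(_ _ d12) eva.
move/cvgrPdist_lt: bc => /(_ _ d22) evb.
have iU1 : 0 < (U1 + 1)^-1 by rewrite invr_gt0; lra.
have iU2 : 0 < (U2 + 1)^-1 by rewrite invr_gt0; lra.
move/cvgrPdist_lt: k1c => /(_ _ iU1) ev1.
move/cvgrPdist_lt: k2c => /(_ _ iU2) ev2.
have fand : forall P Q : R -> Prop, (\forall t \near +oo, P t) ->
    (\forall t \near +oo, Q t) -> \forall t \near +oo, P t /\ Q t.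
  by move=> P Q hP hQ; apply: filterS2 hP hQ.
have := fand _ _ evU (fand _ _ evL (fand _ _ eva (fand _ _ evb
  (fand _ _ ev1 (fand _ _ ev2 (fand _ _ pos Fmono)))))).
apply: filterS => t [hUt [hLt [hat [hbt [h1t [h2t [[Ht [k1t [k2t [at0 bt0]]]] Fm]]]]]]].
clear evU evL eva evb ev1 ev2 pos Fmono fand hd1 hdU hdL hlim hc1 hc2.
rewrite sub0r normrN ger0_norm // in h1t.
rewrite sub0r normrN ger0_norm // in h2t.
have k1U : U1 * k1 t <= 1.
  rewrite -[X in _ < X]div1r ltr_pdivlMr in h1t; last lra.
  have : U1 * k1 t <= (U1 + 1) * k1 t by rewrite ler_wpM2r //; lra.
  rewrite mulrC in h1t; lra.
have k2U : U2 * k2 t <= 1.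
  rewrite -[X in _ < X]div1r ltr_pdivlMr in h2t; last lra.
  have : U2 * k2 t <= (U2 + 1) * k2 t by rewrite ler_wpM2r //; lra.
  rewrite mulrC in h2t; lra.
have aU : a t <= U1 by move: hat; rewrite eU1 ltr_norml; lra.
have bU : b t <= U2 by move: hbt; rewrite eU2 ltr_norml; lra.
have aL : L1 <= a t.
  rewrite eL1 ge_max at0 /=; move: hat; rewrite ltr_norml; lra.
have bL : L2 <= b t.
  rewrite eL2 ge_max bt0 /=; move: hbt; rewrite ltr_norml; lra.
have m1 : F t (1 - U1 * k1 t) (1 - U2 * k2 t) <= F t (1 - a t * k1 t) (1 - b t * k2 t).
  apply: Fm.
  - lra.
  - by rewrite lerD2l lerN2 ler_wpM2r.
  - by rewrite lerBlDr lerDl mulr_ge0.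
  - lra.
  - by rewrite lerD2l lerN2 ler_wpM2r.
  - by rewrite lerBlDr lerDl mulr_ge0.
have m2 : F t (1 - a t * k1 t) (1 - b t * k2 t) <= F t (1 - L1 * k1 t) (1 - L2 * k2 t).
  apply: Fm.
  - have : a t * k1 t <= U1 * k1 t by rewrite ler_wpM2r.
    lra.
  - by rewrite lerD2l lerN2 ler_wpM2r.
  - by rewrite lerBlDr lerDl mulr_ge0.
  - have : b t * k2 t <= U2 * k2 t by rewrite ler_wpM2r.
    lra.
  - by rewrite lerD2l lerN2 ler_wpM2r.
  - by rewrite lerBlDr lerDl mulr_ge0.
have M1 : H t * (1 - F t (1 - a t * k1 t) (1 - b t * k2 t)) <=
          H t * (1 - F t (1 - U1 * k1 t) (1 - U2 * k2 t)).
  by rewrite ler_wpM2l // lerD2l lerN2.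
have M2 : H t * (1 - F t (1 - L1 * k1 t) (1 - L2 * k2 t)) <=
          H t * (1 - F t (1 - a t * k1 t) (1 - b t * k2 t)).
  by rewrite ler_wpM2l // lerD2l lerN2.
move: hUt hLt hU1 hL1 hU2 hL2 M1 M2.
rewrite !ltr_norml.
set XU := H t * (1 - F t (1 - U1 * k1 t) (1 - U2 * k2 t)).
set XL := H t * (1 - F t (1 - L1 * k1 t) (1 - L2 * k2 t)).
set X := H t * (1 - F t (1 - a t * k1 t) (1 - b t * k2 t)).
move=> *; lra.
Qed.
Lemma exp_bounds {R : realType} (x : R) : 0 <= x ->
  x - x ^+ 2 <= 1 - expR (- x) <= x.
Proof.
move=> x0; have h1 := expR_ge1Dx (- x); have h2 := expR_ge1Dx x.
have e : expR x * expR (- x) = 1 by rewrite -expRD subrr expR0.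
have yp := expR_gt0 (- x).
set y := expR (- x) in h1 e yp *.
have : y * (1 + x) <= y * expR x by rewrite ler_wpM2l // ltW.
have : x * (1 - x) <= x * y by rewrite ler_wpM2l.
rewrite [y * expR x]mulrC e => ? ?; apply/andP; split; nra.
Qed.

Lemma exp_ge0' {R : realType} (x : R) : 0 <= x -> 0 <= 1 - expR (- x).
Proof.
move=> x0; have h2 := expR_ge1Dx x.
have e : expR x * expR (- x) = 1 by rewrite -expRD subrr expR0.
have yp := expR_gt0 (- x).
set y := expR (- x) in e yp *.
have : y * (1 + x) <= y * expR x by rewrite ler_wpM2l // ltW.
rewrite [y * expR x]mulrC e => ?; nra.
Qed.

Lemma ratio_aux (R : realType) (k1 k3 : R -> R) (l1 : R) : 0 <= l1 ->
  (\forall t \near +oo, 0 <= k1 t) ->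
  k1 t @[t --> +oo] --> (0:R) ->
  (k3 t / k1 t) @[t --> +oo] --> (1:R) ->
  exists a : R -> R, a t @[t --> +oo] --> l1 /\
    \forall t \near +oo, 0 <= a t /\ 1 - a t * k1 t = expR (- (l1 * k3 t)).
Proof.
move=> l10 k1p k1c rc.
have ev : \forall t \near +oo, 0 < k1 t /\ 0 < k3 t.
  have h2 : (0:R) < 1/2 by lra.
  move/cvgrPdist_lt: (rc) => /(_ _ h2) ev.
  apply: filterS2 k1p ev => t k0 hr.
  have : 1/2 < k3 t / k1 t by move: hr; rewrite ltr_norml; lra.
  move: k0; rewrite le_eqVlt => /orP[/eqP kz|kpos].
    by rewrite -kz invr0 mulr0; lra.
  move=> hh; split => //.
  have -> : k3 t = k3 t / k1 t * k1 t by rewrite divfK // gt_eqF.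
  by apply: mulr_gt0 => //; lra.
exists (fun t => (1 - expR (- (l1 * k3 t))) / k1 t); split; last first.
  apply: filterS ev => t [k1t k3t]; split.
    apply: divr_ge0; last exact: ltW.
    exact: exp_ge0' (mulr_ge0 l10 (ltW k3t)).
  by rewrite divfK ?gt_eqF //; lra.
have k3c : k3 t @[t --> +oo] --> (0:R).
  have eqk : \forall t \near +oo, (fun t => k3 t / k1 t * k1 t) t = k3 t.
    by apply: filterS ev => t [k1t _] /=; rewrite divfK // gt_eqF.
  apply: cvg_trans (near_eq_cvg eqk) _.
  have := cvgM rc k1c; rewrite mul1r; apply; exact: _.
have hc : l1 * (k3 t / k1 t) @[t --> +oo] --> l1.
  have := cvgMl_tmp (a:=l1) rc; rewrite mulr1; apply; exact: _.
apply: (squeeze_cvgr (f := fun t => l1 * (k3 t / k1 t) - l1 * (k3 t / k1 t) * (l1 * k3 t))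
  (h := fun t => l1 * (k3 t / k1 t))); last exact: hc.
- apply: filterS ev => t [k1t k3t].
  have := exp_bounds _ (mulr_ge0 l10 (ltW k3t)).
  set x := l1 * k3 t; set y := expR (- x) => /andP[hl hu].
  have ki : 0 <= (k1 t)^-1 by rewrite invr_ge0 ltW.
  have e1 : l1 * (k3 t / k1 t) = x / k1 t by rewrite /x mulrA.
  have e2 : l1 * (k3 t / k1 t) - l1 * (k3 t / k1 t) * x = (x - x ^+ 2) / k1 t.
    by rewrite e1 expr2 mulrBl; congr (_ - _); rewrite mulrAC.
  by rewrite e2 e1 !ler_wpM2r.
- have := cvgB hc (cvgM hc (cvgMl_tmp (a:=l1) k3c)).
  rewrite !mulr0 subr0; apply; exact: _.
Qed.

Theorem lemma5 (R : realType) (G1 G2 : probability R R)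
  (q1 q2 : nat * nat -> R) (p1 p2 : R -> nat * nat -> R)
  (H k1 k2 k3 k4 : R -> R) (h1 h2 : R -> R -> R) :
  BH2 G1 G2 q1 q2 p1 p2 ->
  (forall t, 0 <= t -> 0 <= H t /\ 0 <= k1 t /\ 0 <= k2 t) ->
  k1 t @[t --> +oo] --> (0:R) ->
  k2 t @[t --> +oo] --> (0:R) ->
  H t @[t --> +oo] --> +oo ->
  (forall l1 l2, 0 <= l1 -> 0 <= l2 ->
     (H t * (1 - BH_F p1 t (1 - l1 * k1 t) (1 - l2 * k2 t))) @[t --> +oo]
       --> h1 l1 l2) ->
  (forall l1 l2, 0 <= l1 -> 0 <= l2 ->
     (H t * (1 - BH_F p2 t (1 - l1 * k1 t) (1 - l2 * k2 t))) @[t --> +oo]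
       --> h2 l1 l2) ->
  (forall l2, 0 <= l2 -> {within `[0, +oo[, continuous (fun l1 => h1 l1 l2)}) ->
  (forall l1, 0 <= l1 -> {within `[0, +oo[, continuous (fun l2 => h1 l1 l2)}) ->
  (forall l2, 0 <= l2 -> {within `[0, +oo[, continuous (fun l1 => h2 l1 l2)}) ->
  (forall l1, 0 <= l1 -> {within `[0, +oo[, continuous (fun l2 => h2 l1 l2)}) ->
  (k3 t / k1 t) @[t --> +oo] --> (1:R) ->
  (k4 t / k2 t) @[t --> +oo] --> (1:R) ->
  forall l1 l2, 0 <= l1 -> 0 <= l2 ->
    ((H t * (1 - BH_F p1 t (expR (- (l1 * k3 t))) (expR (- (l2 * k4 t)))))
       @[t --> +oo] --> h1 l1 l2) /\
    ((H t * (1 - BH_F p2 t (expR (- (l1 * k3 t))) (expR (- (l2 * k4 t)))))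
       @[t --> +oo] --> h2 l1 l2).
Proof.
move=> BH pos k1c k2c _ lim1 lim2 c11 c12 c21 c22 r3 r4 l1 l2 l10 l20.
case: BH => _ _ pmf _ _.
have tpos : \forall t \near +oo, (0:R) <= t.
  by exists 0; split => // x /ltW.
have pos' : \forall t \near +oo, 0 <= H t /\ 0 <= k1 t /\ 0 <= k2 t.
  by apply: filterS tpos => t /pos.
have [a [ac aev]] := @ratio_aux R k1 k3 l1 l10 (filterS (fun t (h : _ /\ _ /\ _) => h.2.1) pos') k1c r3.
have [b [bc bev]] := @ratio_aux R k2 k4 l2 l20 (filterS (fun t (h : _ /\ _ /\ _) => h.2.2) pos') k2c r4.
have posall : \forall t \near +oo,
    0 <= H t /\ 0 <= k1 t /\ 0 <= k2 t /\ 0 <= a t /\ 0 <= b t.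
  apply: filterS3 pos' aev bev => t [? [? ?]] [? _] [? _].
  by split; [|split; [|split; [|split]]].
have eqs : \forall t \near +oo, 1 - a t * k1 t = expR (- (l1 * k3 t)) /\
                                1 - b t * k2 t = expR (- (l2 * k4 t)).
  by apply: filterS2 aev bev => t [_ ->] [_ ->].
have mono : forall p : R -> nat * nat -> R,
  (forall t, 0 <= t -> is_pmf2 (p t)) ->
  \forall t \near +oo, forall s1 s1' s2 s2' : R, 0 <= s1 -> s1 <= s1' -> s1' <= 1 ->
      0 <= s2 -> s2 <= s2' -> s2' <= 1 -> BH_F p t s1 s2 <= BH_F p t s1' s2'.
  move=> p hp; apply: filterS tpos => t t0 s1 s1' s2 s2' *.
  by rewrite /BH_F; apply: pgf2_mono => //; exact: hp.
have fin : forall (p : R -> nat * nat -> R) (h : R -> R -> R),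
  (forall t, 0 <= t -> is_pmf2 (p t)) ->
  (forall m1 m2, 0 <= m1 -> 0 <= m2 ->
     (H t * (1 - BH_F p t (1 - m1 * k1 t) (1 - m2 * k2 t))) @[t --> +oo] --> h m1 m2) ->
  (forall m2, 0 <= m2 -> {within `[0, +oo[, continuous (fun m1 => h m1 m2)}) ->
  (forall m1, 0 <= m1 -> {within `[0, +oo[, continuous (fun m2 => h m1 m2)}) ->
  (H t * (1 - BH_F p t (expR (- (l1 * k3 t))) (expR (- (l2 * k4 t)))))
       @[t --> +oo] --> h l1 l2.
  move=> p h hp hl hc1 hc2.
  have := @mainL R (BH_F p) H k1 k2 a b h l1 l2 l10 l20 (mono p hp) posall k1c k2c ac bc hl hc1 hc2.
  have eqk : \forall t \near +oo,
     (fun t => H t * (1 - BH_F p t (1 - a t * k1 t) (1 - b t * k2 t))) t =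
     H t * (1 - BH_F p t (expR (- (l1 * k3 t))) (expR (- (l2 * k4 t)))).
    by apply: filterS eqs => t [-> ->].
  move=> hh; apply: cvg_trans (near_eq_cvg eqk) _; apply: hh.
split.
- by apply: fin => // t t0; case: (pmf t t0).
- by apply: fin => // t t0; case: (pmf t t0).
Qed.
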